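(* Let $(X,\|\cdot,\cdot\|)$ be a $2$-normed space, $E\subseteq X$, and $f:E\to X$. If $f$ is statistically ward continuous on $E$, then $f$ is statistically sequentially continuous on $E$; that is, for every $x_0\in E$ and every sequence $(x_k)$ of points of $E$ statistically converging to $x_0$, the sequence $(f(x_k))$ statistically converges to $f(x_0)$.
   Context: A $2$-normed space is a real linear space $X$ with $\dim X>1$ together with a function $\|\cdot,\cdot\|:X^2\to\mathbb{R}$ such that for all $x,y,z\in X$, $\alpha\in\mathbb{R}$: (1) $\|x,y\|=0$ iff $x,y$ are linearly dependent; (2) $\|x,y\|=\|y,x\|$; (3) $\|\alpha x,y\|=|\alpha|\|x,y\|$; (4) $\|x,y+z\|\le\|x,y\|+\|x,z\|$. A sequence $(x_k)$ in $X$ statistically converges to $L\in X$ if for every $\epsilon>0$ and every $z\in X$, $\lim_{n\to\infty}\frac1n|\{k\le n:\|x_k-L,z\|\ge\epsilon\}|=0$. For a sequence $(x_k)$ write $\Delta x_k=x_{k+1}-x_k$. A sequence $(x_k)$ in $X$ is statistically quasi-Cauchy if for every $\epsilon>0$ and every $z\in X$, $\lim_{n\to\infty}\frac1n|\{k\le n:\|\Delta x_k,z\|\ge\epsilon\}|=0$. A function $f:E\to X$ is statistically ward continuous on $E$ if $(f(x_k))$ is statistically quasi-Cauchy whenever $(x_k)$ is a statistically quasi-Cauchy sequence of points of $E$. *)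

(* Defs.v *)
From Stdlib Require Import Reals Lra Lia.
Open Scope R_scope.

Record RVecSpace := {
  vs_car :> Type;
  vs_zero : vs_car;
  vs_add : vs_car -> vs_car -> vs_car;
  vs_opp : vs_car -> vs_car;
  vs_scal : R -> vs_car -> vs_car;
  vs_addA : forall x y z, vs_add x (vs_add y z) = vs_add (vs_add x y) z;
  vs_addC : forall x y, vs_add x y = vs_add y x;
  vs_add0 : forall x, vs_add x vs_zero = x;
  vs_addN : forall x, vs_add x (vs_opp x) = vs_zero;
  vs_scalA : forall a b x, vs_scal a (vs_scal b x) = vs_scal (a * b) x;
  vs_scal1 : forall x, vs_scal 1 x = x;
  vs_scalDr : forall a x y, vs_scal a (vs_add x y) = vs_add (vs_scal a x) (vs_scal a y);
  vs_scalDl : forall a b x, vs_scal (a + b) x = vs_add (vs_scal a x) (vs_scal b x)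
}.

Arguments vs_zero {_}.
Arguments vs_add {_} _ _.
Arguments vs_opp {_} _.
Arguments vs_scal {_} _ _.

Definition vs_sub {X : RVecSpace} (x y : X) : X := vs_add x (vs_opp y).

Definition lin_dep {X : RVecSpace} (x y : X) : Prop :=
  exists a b : R, (a <> 0 \/ b <> 0) /\ vs_add (vs_scal a x) (vs_scal b y) = vs_zero.

Record TwoNormedSpace := {
  tn_vs :> RVecSpace;
  tn_norm : tn_vs -> tn_vs -> R;
  tn_dim : exists x y : tn_vs, ~ lin_dep x y;
  tn_zero : forall x y, tn_norm x y = 0 <-> lin_dep x y;
  tn_sym : forall x y, tn_norm x y = tn_norm y x;
  tn_hom : forall (a : R) x y, tn_norm (vs_scal a x) y = Rabs a * tn_norm x y;
  tn_tri : forall x y z, tn_norm x (vs_add y z) <= tn_norm x y + tn_norm x z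
}.

Arguments tn_norm {_} _ _.

Fixpoint count_ge (eps : R) (a : nat -> R) (n : nat) : nat :=
  match n with
  | O => O
  | S m => (if Rle_dec eps (a m) then 1 else 0) + count_ge eps a m
  end.

Definition density_zero_ge (eps : R) (a : nat -> R) : Prop :=
  Un_cv (fun n => INR (count_ge eps a n) / INR n) 0.

Definition stat_conv {X : TwoNormedSpace} (x : nat -> X) (L : X) : Prop :=
  forall (eps : R) (z : X), eps > 0 ->
    density_zero_ge eps (fun k => tn_norm (vs_sub (x k) L) z).

Definition delta {X : TwoNormedSpace} (x : nat -> X) (k : nat) : X :=
  vs_sub (x (S k)) (x k).

Definition stat_quasi_cauchy {X : TwoNormedSpace} (x : nat -> X) : Prop :=
  forall (eps : R) (z : X), eps > 0 ->
    density_zero_ge eps (fun k => tn_norm (delta x k) z).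

(* f defined on E (f given on all of X, only values on E matter) *)
Definition stat_ward_continuous {X : TwoNormedSpace} (E : X -> Prop) (f : X -> X) : Prop :=
  forall x : nat -> X, (forall k, E (x k)) -> stat_quasi_cauchy x ->
    stat_quasi_cauchy (fun k => f (x k)).

Definition stat_seq_continuous {X : TwoNormedSpace} (E : X -> Prop) (f : X -> X) : Prop :=
  forall (x0 : X) (x : nat -> X), E x0 -> (forall k, E (x k)) -> stat_conv x x0 ->
    stat_conv (fun k => f (x k)) (f x0).

(* Main.v *)
Require Import Defs.
From Stdlib Require Import Reals.
From Stdlib Require Import Lra Lia Arith ZArith.
Open Scope R_scope.

Section VS.
Variable X : RVecSpace.

Lemma scal0 (x : X) : vs_scal 0 x = vs_zero.
Proof.
  assert (H : vs_scal 0 x = vs_add (vs_scal 0 x) (vs_scal 0 x)).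
  { rewrite <- vs_scalDl. f_equal. ring. }
  rewrite <- (vs_addN _ (vs_scal 0 x)).
  rewrite H at 2. rewrite <- vs_addA, vs_addN, vs_add0. reflexivity.
Qed.

Lemma opp_scal (x : X) : vs_opp x = vs_scal (-1) x.
Proof.
  assert (H : vs_add x (vs_scal (-1) x) = vs_zero).
  { rewrite <- (vs_scal1 _ x) at 1. rewrite <- vs_scalDl.
    replace (1 + -1) with 0 by ring. apply scal0. }
  rewrite <- (vs_add0 _ (vs_opp x)). rewrite <- H.
  rewrite vs_addA. rewrite (vs_addC _ (vs_opp x) x), vs_addN.
  rewrite vs_addC, vs_add0. reflexivity.
Qed.

Lemma sub_sym (a b : X) : vs_sub b a = vs_scal (-1) (vs_sub a b).
Proof.
  unfold vs_sub. rewrite vs_scalDr. rewrite (opp_scal b), vs_scalA.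
  replace (-1 * -1) with 1 by ring. rewrite vs_scal1, <- opp_scal.
  apply vs_addC.
Qed.
End VS.

Lemma norm_sub_sym (X : TwoNormedSpace) (a b z : X) :
  tn_norm (vs_sub b a) z = tn_norm (vs_sub a b) z.
Proof.
  rewrite sub_sym, tn_hom. replace (Rabs (-1)) with 1. ring.
  rewrite Rabs_left by lra. ring.
Qed.

Lemma div_nn (x y : R) : 0 <= x -> 0 < y -> 0 <= x / y.
Proof. intros. unfold Rdiv. apply Rmult_le_pos; auto. left. apply Rinv_0_lt_compat; auto. Qed.

Lemma count_S eps a n : (count_ge eps a (S n) <= count_ge eps a n + 1)%nat.
Proof. simpl. destruct (Rle_dec eps (a n)); lia. Qed.

Lemma count_mono eps a n m : (n <= m)%nat -> (count_ge eps a n <= count_ge eps a m)%nat.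
Proof.
  induction 1; auto. simpl. lia.
Qed.

Lemma count_inter eps (a b : nat -> R) :
  (forall k, b (2*k)%nat = a k) -> (forall k, b (S (2*k)) = a (S k)) ->
  forall n, (count_ge eps b (2*n) <= count_ge eps a n + count_ge eps a (S n))%nat.
Proof.
  intros H1 H2. induction n.
  - simpl. lia.
  - replace (2 * S n)%nat with (S (S (2*n))) by lia.
    change (count_ge eps b (S (S (2 * n)))) with
      ((if Rle_dec eps (b (S (2*n))) then 1 else 0) +
       ((if Rle_dec eps (b (2*n)%nat) then 1 else 0) + count_ge eps b (2*n)))%nat.
    rewrite H1, H2.
    change (count_ge eps a (S (S n))) with
      ((if Rle_dec eps (a (S n)) then 1 else 0) + count_ge eps a (S n))%nat.
    change (count_ge eps a (S n)) with
      ((if Rle_dec eps (a n) then 1 else 0) + count_ge eps a n)%nat in IHn |- *.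
    destruct (Rle_dec eps (a n)); destruct (Rle_dec eps (a (S n))); lia.
Qed.

Lemma count_inter_bound eps a b :
  (forall k, b (2*k)%nat = a k) -> (forall k, b (S (2*k)) = a (S k)) ->
  forall m, (count_ge eps b m <= 2 * count_ge eps a m + 2)%nat.
Proof.
  intros H1 H2 m.
  destruct (Nat.Even_or_Odd m) as [[n Hn]|[n Hn]]; subst m.
  - pose proof (count_inter eps a b H1 H2 n).
    pose proof (count_S eps a n).
    pose proof (count_mono eps a n (2*n) ltac:(lia)). lia.
  - pose proof (count_inter eps a b H1 H2 n).
    pose proof (count_S eps a n).
    pose proof (count_S eps b (2*n)).
    replace (2*n+1)%nat with (S (2*n)) by lia.
    pose proof (count_mono eps a n (S (2*n)) ltac:(lia)). lia.
Qed.

Lemma count_sub eps (a b : nat -> R) :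
  (forall k, b (2*k)%nat = a k) ->
  forall n, (count_ge eps a n <= count_ge eps b (2*n))%nat.
Proof.
  intros H1. induction n.
  - simpl. lia.
  - replace (2 * S n)%nat with (S (S (2*n))) by lia.
    change (count_ge eps b (S (S (2 * n)))) with
      ((if Rle_dec eps (b (S (2*n))) then 1 else 0) +
       ((if Rle_dec eps (b (2*n)%nat) then 1 else 0) + count_ge eps b (2*n)))%nat.
    rewrite H1.
    change (count_ge eps a (S n)) with
      ((if Rle_dec eps (a n) then 1 else 0) + count_ge eps a n)%nat.
    destruct (Rle_dec eps (a n)); destruct (Rle_dec eps (b (S (2*n)))); lia.
Qed.

Lemma squeeze1 eps a b :
  (forall m, (count_ge eps b m <= 2 * count_ge eps a m + 2)%nat) ->
  density_zero_ge eps a -> density_zero_ge eps b.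
Proof.
  unfold density_zero_ge, Un_cv, R_dist. intros Hb Ha e He.
  destruct (Ha (e/4) ltac:(lra)) as [N1 HN1].
  destruct (archimed (4/e)) as [Hup _].
  set (N2 := Z.to_nat (up (4/e))).
  assert (HN2 : 4/e <= INR N2).
  { unfold N2. rewrite INR_IZR_INZ, Z2Nat.id. lra.
    apply le_IZR. assert (0 < 4/e) by (apply Rdiv_lt_0_compat; lra). lra. }
  exists (max (S N1) N2). intros m Hm.
  assert (HmN1 : (m >= N1)%nat) by lia.
  specialize (HN1 m HmN1).
  assert (Hm0 : 0 < INR m) by (apply lt_0_INR; lia).
  assert (HmN2 : INR N2 <= INR m) by (apply le_INR; lia).
  pose proof (Hb m) as Hbm. apply le_INR in Hbm.
  rewrite plus_INR, mult_INR in Hbm. simpl in Hbm.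
  pose proof (pos_INR (count_ge eps b m)) as P1.
  pose proof (pos_INR (count_ge eps a m)) as P2.
  rewrite Rminus_0_r in *.
  rewrite Rabs_pos_eq in HN1 by (apply div_nn; lra).
  rewrite Rabs_pos_eq by (apply div_nn; lra).
  apply Rmult_lt_reg_r with (INR m); auto.
  unfold Rdiv in *. rewrite Rmult_assoc, Rinv_l by lra.
  apply Rmult_lt_compat_r with (r := INR m) in HN1; auto.
  rewrite Rmult_assoc, Rinv_l in HN1 by lra.
  assert (4 <= e * INR m).
  { apply Rmult_le_compat_l with (r := e) in HN2; [|lra].
    replace (e * (4 * / e)) with 4 in HN2 by (field; lra). assert (e * INR N2 <= e * INR m) by (apply Rmult_le_compat_l; lra). lra. }
  lra.
Qed.

Lemma squeeze2 eps a b :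
  (forall n, (count_ge eps a n <= count_ge eps b (2*n))%nat) ->
  density_zero_ge eps b -> density_zero_ge eps a.
Proof.
  unfold density_zero_ge, Un_cv, R_dist. intros Hab Hb e He.
  destruct (Hb (e/2) ltac:(lra)) as [N HN].
  exists (S N). intros n Hn.
  specialize (HN (2*n)%nat ltac:(lia)).
  assert (Hn0 : 0 < INR n) by (apply lt_0_INR; lia).
  pose proof (Hab n) as H. apply le_INR in H.
  pose proof (pos_INR (count_ge eps a n)) as P1.
  pose proof (pos_INR (count_ge eps b (2*n))) as P2.
  rewrite mult_INR in HN. replace (INR 2) with 2 in HN by (simpl; ring).
  rewrite Rminus_0_r in *.
  rewrite Rabs_pos_eq in HN by (apply div_nn; lra).
  rewrite Rabs_pos_eq by (apply div_nn; lra).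
  apply Rmult_lt_reg_r with (INR n); auto.
  unfold Rdiv in *. rewrite Rmult_assoc, Rinv_l by lra.
  apply Rmult_lt_compat_r with (r := 2 * INR n) in HN; [|lra].
  rewrite Rmult_assoc, Rinv_l in HN by lra.
  lra.
Qed.

Theorem theorem3p3 (X : TwoNormedSpace) (E : X -> Prop) (f : X -> X) :
  stat_ward_continuous E f -> stat_seq_continuous E f.
Proof.
  intros Hw x0 x Hx0 Hx Hc.
  set (y := fun k => if Nat.even k then x (Nat.div2 k) else x0).
  assert (Hy0 : forall k, y (2*k)%nat = x k).
  { intro k. unfold y. rewrite Nat.even_even, Nat.div2_double. reflexivity. }
  assert (Hy1 : forall k, y (S (2*k)) = x0).
  { intro k. unfold y. replace (S (2*k)) with (2*k+1)%nat by lia.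
    rewrite Nat.even_odd. reflexivity. }
  assert (Hy2 : forall k, y (S (S (2*k))) = x (S k)).
  { intro k. replace (S (S (2*k))) with (2 * S k)%nat by lia. apply Hy0. }
  assert (HE : forall k, E (y k)).
  { intro k. unfold y. destruct (Nat.even k); auto. }
  assert (Hq : stat_quasi_cauchy y).
  { intros eps z Heps.
    apply squeeze1 with (a := fun k => tn_norm (vs_sub (x k) x0) z).
    - apply count_inter_bound.
      + intro k. unfold delta. rewrite Hy1, Hy0. apply norm_sub_sym.
      + intro k. unfold delta. rewrite Hy1, Hy2. reflexivity.
    - apply Hc; auto. }
  specialize (Hw y HE Hq).
  intros eps z Heps.
  apply squeeze2 with (b := fun k => tn_norm (delta (fun k => f (y k)) k) z).
  - apply count_sub. intro k. unfold delta. cbv beta. rewrite Hy1, Hy0.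
    symmetry. apply norm_sub_sym.
  - apply Hw; auto.
Qed.
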